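(* Let $A\in\mathbb{R}^{m\times n}$ with $m>n$, and let $A=U_A\Sigma_AV_A^T$ be its economy SVD, $U_A\in\mathbb{R}^{m\times n}$ with orthonormal columns. Let $\lambda>0$. Let $X\in\mathbb{R}^{s\times m}$ with $m>s\geq n$ be a matrix such that, for some $0<\epsilon<1$, $$1-\epsilon<\sigma_{\min}(XU_A)\le\sigma_{\max}(XU_A)<1+\epsilon .$$ Suppose $R\in\mathbb{R}^{n\times n}$ is an upper triangular matrix such that $R^TR=A^TX^TXA+\lambda I_n$. Then $$\kappa_2(BR^{-1})\le\frac{1+\epsilon}{1-\epsilon},\qquad\text{where } B=\begin{bmatrix}A\\ \sqrt{\lambda}I_n\end{bmatrix}\in\mathbb{R}^{(m+n)\times n}.$$
   Context: $\sigma_{\min},\sigma_{\max}$ denote the smallest and largest singular values (of an $s\times n$ matrix, among its $n$ singular values), and $\kappa_2(M)=\sigma_{\max}(M)/\sigma_{\min}(M)$ is the spectral condition number of a full-column-rank matrix $M$. Note $R$ is invertible since $R^TR$ is positive definite. *)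

(* Defs.v *)
From HB Require Import structures.
From mathcomp Require Import all_boot all_order all_algebra.
From mathcomp Require Import boolp classical_sets reals.
Set Implicit Arguments. Unset Strict Implicit. Unset Printing Implicit Defensive.
Import Order.TTheory GRing.Theory Num.Theory.
Local Open Scope ring_scope.
Local Open Scope classical_set_scope.

(* sigma is a singular value of M : s x n  iff sigma >= 0 and sigma^2 is an
   eigenvalue of M^T M (the n singular values, ignoring multiplicity). *)
Definition singular_values (R : realType) (s n : nat) (M : 'M[R]_(s, n)) : set R :=
  [set sg | 0 <= sg /\ eigenvalue (M^T *m M) (sg ^+ 2)].

Definition sigma_max (R : realType) (s n : nat) (M : 'M[R]_(s, n)) : R :=
  sup (singular_values M).
Definition sigma_min (R : realType) (s n : nat) (M : 'M[R]_(s, n)) : R :=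
  inf (singular_values M).

Definition kappa2 (R : realType) (s n : nat) (M : 'M[R]_(s, n)) : R :=
  sigma_max M / sigma_min M.

Definition upper_triangular (R : realType) (n : nat) (T : 'M[R]_n) : Prop :=
  forall i j : 'I_n, (j < i)%N -> T i j = 0.

Definition is_diag (R : realType) (n : nat) (D : 'M[R]_n) : Prop :=
  forall i j : 'I_n, i != j -> D i j = 0.

Definition economy_svd (R : realType) (m n : nat) (A : 'M[R]_(m, n))
  (U : 'M[R]_(m, n)) (S : 'M[R]_n) (V : 'M[R]_n) : Prop :=
  [/\ U^T *m U = 1%:M, is_diag S, (forall i, 0 <= S i i),
      V^T *m V = 1%:M & A = U *m S *m V^T].

(* Main.v *)
Require Import Defs.
From HB Require Import structures.
From mathcomp Require Import all_boot all_order all_algebra.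
From mathcomp Require Import boolp classical_sets reals.
From mathcomp Require Import sesquilinear spectral complex ring lra.
Import Order.TTheory GRing.Theory Num.Theory.
Set Implicit Arguments. Unset Strict Implicit. Unset Printing Implicit Defensive.
Local Open Scope ring_scope.

Definition nrm (R : realType) k (x : 'cV[R]_k) : R := (x^T *m x) 0 0.

Lemma nrmE (R : realType) k (x : 'cV[R]_k) : nrm x = \sum_i (x i 0) ^+ 2.
Proof. by rewrite /nrm mxE; apply: eq_bigr => i _; rewrite mxE expr2. Qed.

Lemma nrm_ge0 (R : realType) k (x : 'cV[R]_k) : 0 <= nrm x.
Proof. by rewrite nrmE sumr_ge0 // => i _; rewrite sqr_ge0. Qed.

Lemma nrm_gt0 (R : realType) k (x : 'cV[R]_k) : x != 0 -> 0 < nrm x.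
Proof.
move=> x0; rewrite lt_def nrm_ge0 andbT; apply: contra x0 => /eqP.
rewrite nrmE => /psumr_eq0P H; apply/eqP/matrixP => i j.
rewrite (ord1 j) mxE; apply/eqP; rewrite -sqrf_eq0; apply/eqP/H => // l _.
exact: sqr_ge0.
Qed.

Lemma eig_WtW_ge0 (R : realType) s n (W : 'M[R]_(s, n)) c :
  eigenvalue (W^T *m W) c -> 0 <= c.
Proof.
move=> /eigenvalueP [v Hv v0].
have Hp : 0 < nrm v^T by apply: nrm_gt0; rewrite trmx_eq0.
have E : c * nrm v^T = nrm (W *m v^T).
  rewrite /nrm trmxK trmx_mul trmxK.
  have -> : c * (v *m v^T) 0 0 = ((c *: v) *m v^T) 0 0 by rewrite -scalemxAl [in RHS]mxE.
  by rewrite -Hv !mulmxA.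
rewrite -(pmulr_lge0 _ Hp) E; exact: nrm_ge0.
Qed.

Lemma eig_sv (R : realType) s n (W : 'M[R]_(s, n)) c :
  eigenvalue (W^T *m W) c -> singular_values W (Num.sqrt c).
Proof.
move=> Hc; split; first exact: sqrtr_ge0.
by rewrite sqr_sqrtr //; exact: eig_WtW_ge0 Hc.
Qed.

Local Open Scope complex_scope.

Lemma complex_eig (R : realType) n (G : 'M[R]_n) (d : R[i]) :
  d \is Num.real -> eigenvalue (map_mx (real_complex R) G) d ->
  eigenvalue G (complex.Re d).
Proof.
move=> dr; rewrite eigenvalue_root_char -map_char_poly -(RRe_real dr).
by rewrite fmorph_root -eigenvalue_root_char.
Qed.

Lemma toCM (R : realType) (x y : R) : real_complex R (x * y) = real_complex R x * real_complex R y.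
Proof. exact: (rmorphM (real_complex R)). Qed.

Local Open Scope sesquilinear_scope.

Lemma toC_real (R : realType) (x : R) : real_complex R x \is Num.real.
Proof. by apply/complex_realP; exists x. Qed.

Lemma toC_conj (R : realType) (x : R) : (real_complex R x)^*%R = real_complex R x.
Proof. by rewrite conj_Creal // toC_real. Qed.

Lemma spec_bound (R : realType) s n (W : 'M[R]_(s, n)) (a b : R) :
  0 <= a -> (forall sg, singular_values W sg -> a <= sg <= b) ->
  forall w : 'cV[R]_n, a ^+ 2 * nrm w <= nrm (W *m w) <= b ^+ 2 * nrm w.
Proof.
move=> a0 Hab w.
set G := W^T *m W.
have Geig : forall c, eigenvalue G c -> a ^+ 2 <= c <= b ^+ 2.
  move=> c Hc; have c0 := eig_WtW_ge0 Hc.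
  have /Hab /andP[h1 h2] := eig_sv Hc.
  have sc0 := sqrtr_ge0 c.
  rewrite -(sqr_sqrtr c0) !ler_pXn2r // ?h1 ?h2 //.
  by rewrite nnegrE (le_trans sc0 h2).

set toC := real_complex R.
set Gc := map_mx toC G.
have Gsym : Gc \is hermsymmx.
  apply: realsym_hermsym.
    apply/is_hermitianmxP; rewrite expr0 scale1r map_mx_id //.
    by rewrite /Gc map_trmx /G trmx_mul trmxK.
  by apply/mxOverP => i j; rewrite mxE toC_real.
set P := spectralmx Gc; set d := spectral_diag Gc.
have HGc : Gc = invmx P *m diag_mx d *m P.
  by apply/orthomx_spectralP/hermitian_normalmx.
have dreal : d \is a realmx by apply: hermitian_spectral_diag_real.
have Punit : P \in unitmx by apply: spectral_unit.
have PinvE : invmx P = P ^t* by apply/invmx_unitary/spectral_unitarymx.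
have deig : forall i, eigenvalue Gc (d 0 i).
  move=> i; apply/eigenvalueP; exists (row i P).
    rewrite HGc !mulmxA -row_mul mulmxV // rowE [in RHS]rowE mulmx1 scalemxAl.
    congr (_ *m _); apply/rowP => j; rewrite mul_mx_diag !mxE.
    rewrite eqxx /=; have [->|_] := eqVneq j i; first by rewrite mul1r mulr1.
    by rewrite mulr0 mul0r.
  apply/negP => /eqP H0.
  have : row i P *m invmx P = row i 1%:M by rewrite -row_mul mulmxV.
  rewrite H0 mul0mx => /rowP /(_ i); rewrite !mxE eqxx => /eqP.
  by rewrite eq_sym oner_eq0.
have dbd : forall i, a ^+ 2 <= complex.Re (d 0 i) <= b ^+ 2.
  move=> i; apply: Geig; apply: complex_eig (deig i).
  by have /mxOverP := dreal; apply.
set wc := map_mx toC w; set y := P *m wc.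
have toCE : forall (M : 'M[R]_1), toC (M 0 0) = (M ^ toC) 0 0 by move=> M; rewrite mxE.
have wcE : wc^T = wc ^t*.
  apply/matrixP => i j; rewrite !mxE.
  by rewrite conj_Creal // toC_real.
have ytE : y ^t* = wc^T *m P ^t*.
  by rewrite /y trmx_mul map_mxM -wcE.
have E1 : toC (nrm (W *m w)) = \sum_j (y j 0)^*%R * d 0 j * y j 0.
  rewrite /nrm trmx_mul -mulmxA (mulmxA W^T) -/G mulmxA toCE map_mxM [X in X *m _]map_mxM -map_trmx -/wc -/Gc.
  rewrite HGc PinvE !mulmxA -ytE -!mulmxA -/y mulmxA.
  by rewrite mxE; apply: eq_bigr => j _; rewrite mul_mx_diag !mxE.
have E2 : toC (nrm w) = \sum_j (y j 0)^*%R * y j 0.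
  rewrite /nrm toCE map_mxM -map_trmx -/wc.
  rewrite -{2}[wc]mul1mx -(mulVmx Punit) PinvE !mulmxA -ytE -mulmxA -/y.
  by rewrite mxE; apply: eq_bigr => j _; rewrite !mxE.
have Hy : forall j, 0 <= (y j 0)^*%R * y j 0 by move=> j; rewrite mulrC mul_conjC_ge0.
have dE : forall j, d 0 j = toC (complex.Re (d 0 j)).
  by move=> j; rewrite /toC RRe_real //; have /mxOverP := dreal; apply.
apply/andP; split; rewrite -lecR.
  change (toC (a ^+ 2 * nrm w) <= toC (nrm (W *m w))).
  rewrite /toC toCM -/toC E1 E2 mulr_sumr; apply: ler_sum => j _.
  rewrite mulrAC [X in X <= _]mulrC; apply: ler_wpM2l => //.
  rewrite dE lecR; by case/andP: (dbd j).
change (toC (nrm (W *m w)) <= toC (b ^+ 2 * nrm w)).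
rewrite /toC toCM -/toC E1 E2 mulr_sumr; apply: ler_sum => j _.
rewrite mulrAC [X in _ <= X]mulrC; apply: ler_wpM2l => //.
rewrite dE lecR; by case/andP: (dbd j).
Qed.

Lemma sum_ge_term (R : numDomainType) n (F : 'I_n -> R) i :
  (forall j, 0 <= F j) -> F i <= \sum_j F j.
Proof. by move=> H; rewrite (bigD1 i) //= ler_wpDr // sumr_ge0. Qed.

Lemma eig_bound (R : realType) n (G : 'M[R]_n) c :
  eigenvalue G c -> `|c| <= \sum_i \sum_j `|G i j|.
Proof.
move=> /eigenvalueP [v Hv v0].
have [j0 vj0] : exists j, v 0 j != 0.
  apply/existsP; apply: contraR v0 => /existsPn H; apply/eqP/rowP => j.
  by rewrite mxE; apply/eqP; move: (H j); rewrite negbK.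
case: (@arg_maxP _ _ _ j0 xpredT (fun i => `|v 0 i|) isT) => k _ Hk.
have vk : 0 < `|v 0 k|.
  by apply: lt_le_trans (Hk j0 isT); rewrite normr_gt0.
have E : c * v 0 k = \sum_i v 0 i * G i k.
  by have /rowP /(_ k) := Hv; rewrite !mxE => <-.
rewrite -(ler_pM2r vk) -normrM E.
apply: le_trans (ler_norm_sum _ _ _) _.
rewrite mulr_suml; apply: ler_sum => i _.
rewrite normrM mulrC; apply: ler_pM => //; last exact: Hk.
by rewrite (bigD1 k) //= ler_wpDr // sumr_ge0.

Qed.

Lemma eig_quad (R : realType) s n (W : 'M[R]_(s, n)) c (v : 'rV[R]_n) :
  v *m (W^T *m W) = c *: v -> c * nrm v^T = nrm (W *m v^T).
Proof.
move=> Hv; rewrite /nrm trmxK trmx_mul trmxK.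
have -> : c * (v *m v^T) 0 0 = ((c *: v) *m v^T) 0 0 by rewrite -scalemxAl [in RHS]mxE.
by rewrite -Hv !mulmxA.
Qed.

Lemma sv_ub (R : realType) s n (W : 'M[R]_(s, n)) :
  exists K, forall sg, singular_values W sg -> sg <= K.
Proof.
set G := W^T *m W.
exists (1 + \sum_i \sum_j `|G i j|) => sg [sg0 Hsg].
have Hb := eig_bound Hsg.
have sq : sg ^+ 2 <= \sum_i \sum_j `|G i j| by apply: le_trans Hb; exact: ler_norm.
have [sg1|sg1] := lerP sg 1.
  by apply: le_trans sg1 _; rewrite lerDl; apply: le_trans sq; exact: sqr_ge0.
have h : sg <= \sum_i \sum_j `|G i j|.
  by apply: le_trans sq; rewrite expr2 ler_peMr // ltW.
by apply: le_trans h _; rewrite lerDr.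
Qed.

Lemma nrm_col (R : realType) m n (x : 'cV[R]_m) (y : 'cV[R]_n) :
  nrm (col_mx x y) = nrm x + nrm y.
Proof. by rewrite /nrm tr_col_mx mul_row_col mxE. Qed.

Lemma nrmZ (R : realType) n (a : R) (x : 'cV[R]_n) : nrm (a *: x) = a ^+ 2 * nrm x.
Proof. by rewrite /nrm linearZ /= linearZ /= -scalemxAl !mxE mulrA expr2. Qed.

Lemma nrm_mul (R : realType) m n (N : 'M[R]_(m, n)) (x : 'cV[R]_n) :
  nrm (N *m x) = (x^T *m (N^T *m N) *m x) 0 0.
Proof. by rewrite /nrm trmx_mul !mulmxA. Qed.

Lemma quadD (R : realType) n (N : 'M[R]_n) (l : R) (x : 'cV[R]_n) :
  (x^T *m (N + l%:M) *m x) 0 0 = (x^T *m N *m x) 0 0 + l * nrm x.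
Proof.
by rewrite mulmxDr mulmxDl mxE mul_mx_scalar -scalemxAl [X in _ + X = _]mxE.
Qed.

Lemma arith (R : realType) (sg e l p q r : R) :
  0 <= sg -> 0 < e -> e < 1 -> 0 < l -> 0 <= p -> 0 <= q ->
  (1 - e) ^+ 2 * p <= r -> r <= (1 + e) ^+ 2 * p -> 0 < r + l * q ->
  sg ^+ 2 * (r + l * q) = p + l * q ->
  1 <= sg * (1 + e) /\ sg * (1 - e) <= 1.
Proof.
move=> sg0 e0 e1 l0 p0 q0 h1 h2 N0 E.
have lq : 0 <= l * q by rewrite mulr_ge0 // ltW.
have H1 : 0 <= l * q * ((1 + e) ^+ 2 - 1) by rewrite mulr_ge0 // subr_ge0; nra.
have H2 : 0 <= l * q * (1 - (1 - e) ^+ 2) by rewrite mulr_ge0 // subr_ge0; nra.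
have A1 : 1 <= sg ^+ 2 * (1 + e) ^+ 2.
  rewrite -(ler_pM2r N0) mul1r mulrAC E.
  nra.
have A2 : sg ^+ 2 * (1 - e) ^+ 2 <= 1.
  rewrite -(ler_pM2r N0) mul1r mulrAC E.
  nra.
rewrite -exprMn in A1; rewrite -exprMn in A2.
have u0 : 0 <= sg * (1 + e) by rewrite mulr_ge0 //; lra.
have v0 : 0 <= sg * (1 - e) by rewrite mulr_ge0 //; lra.
move: A1 A2 u0 v0; set u := sg * (1 + e); set v := sg * (1 - e) => A1 A2 u0 v0.
split; nra.
Qed.

Close Scope sesquilinear_scope.
Close Scope complex_scope.
Unset Implicit Arguments.

Theorem lemma2p1 (R : realType) (m n s : nat)
  (A : 'M[R]_(m, n)) (UA : 'M[R]_(m, n)) (SA VA : 'M[R]_n)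
  (lambda eps : R) (X : 'M[R]_(s, m)) (T : 'M[R]_n) :
  (n < m)%N -> economy_svd A UA SA VA -> 0 < lambda ->
  (s < m)%N -> (n <= s)%N ->
  0 < eps -> eps < 1 ->
  1 - eps < sigma_min (X *m UA) -> sigma_max (X *m UA) < 1 + eps ->
  upper_triangular T ->
  T^T *m T = A^T *m X^T *m X *m A + lambda%:M ->
  kappa2 (col_mx A ((Num.sqrt lambda)%:M : 'M[R]_n) *m invmx T)
    <= (1 + eps) / (1 - eps).
Proof.
move=> _ [UU _ _ _ AE] l0 _ _ e0 e1 Hmin Hmax _ TT.
set W := X *m UA.
have HS : forall sg, singular_values W sg -> 1 - eps <= sg <= 1 + eps.
  move=> sg Hsg; apply/andP; split.
    apply/ltW/(lt_le_trans Hmin); apply: ge_inf => //.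
    by exists 0 => x [].
  apply/ltW/(le_lt_trans _ Hmax); apply: ub_le_sup => //.
  by have [K HK] := sv_ub W; exists K.
have e1' : 0 <= 1 - eps by rewrite subr_ge0 ltW.
have HW := spec_bound e1' HS.
have Tq : forall z, nrm (T *m z) = nrm (W *m (SA *m VA^T *m z)) + lambda * nrm z.
  move=> z; rewrite nrm_mul TT quadD.
  have -> : A^T *m X^T *m X *m A = (X *m A)^T *m (X *m A) by rewrite trmx_mul !mulmxA.
  by rewrite -nrm_mul /W AE !mulmxA.
have Tu : T \in unitmx.
  apply/negPn/negP => Tn.
  have : kermx T^T != 0 by rewrite kermx_eq0 row_free_unit unitmx_tr.
  case/rowV0Pn => v /sub_kermxP Hv v0.
  have Tz : T *m v^T = 0 by rewrite -(trmxK T) -trmx_mul Hv trmx0.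
  have := Tq v^T; rewrite Tz {1}/nrm trmx0 mul0mx mxE => /esym /eqP.
  apply/negP; rewrite gt_eqF // ltr_pwDr ?nrm_ge0 // mulr_gt0 // nrm_gt0 //.
  by rewrite trmx_eq0.
set M := col_mx A _ *m invmx T.
have HM : forall sg, singular_values M sg -> 1 <= sg * (1 + eps) /\ sg * (1 - eps) <= 1.
  move=> sg [sg0 /eigenvalueP [v Hv v0]].
  have E := eig_quad Hv.
  set z := invmx T *m v^T.
  have xE : v^T = T *m z by rewrite /z mulKVmx.
  set w := SA *m VA^T *m z.
  have Mx : nrm (M *m v^T) = nrm w + lambda * nrm z.
    rewrite /M -mulmxA -/z mul_col_mx nrm_col mul_scalar_mx nrmZ sqr_sqrtr ?ltW //.
    congr (_ + _); have -> : A *m z = UA *m w by rewrite AE /w !mulmxA.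
    by rewrite nrm_mul UU mulmx1.
  have Np : 0 < nrm (T *m z) by rewrite -xE nrm_gt0 // trmx_eq0.
  rewrite Mx xE Tq in E; rewrite Tq in Np.
  have [h1 h2] := andP (HW w).
  by apply: (arith sg0 e0 e1 l0 (nrm_ge0 w) (nrm_ge0 z) h1 h2 Np E).
have a0 : 0 < 1 - eps by rewrite subr_gt0.
have b0 : 0 < 1 + eps by rewrite ltr_wpDr // ltW.
rewrite /kappa2 /sigma_max /sigma_min.
case: (pselect (singular_values M !=set0)%classic) => [ne|emp]; last first.
  have -> : singular_values M = set0.
    by apply/seteqP; split => x // Hx; exfalso; apply: emp; exists x.
  by rewrite sup0 mul0r divr_ge0 // ltW.
have hsup : sup (singular_values M) * (1 - eps) <= 1.
  rewrite -ler_pdivlMr // div1r; apply: ge_sup => // x Hx.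
  by rewrite -[_^-1]div1r ler_pdivlMr //; case: (HM x Hx).
have hinf : 1 <= inf (singular_values M) * (1 + eps).
  rewrite -ler_pdivrMr // div1r; apply: lb_le_inf => // x Hx.
  by rewrite -[_^-1]div1r ler_pdivrMr //; case: (HM x Hx).
have i0 : 0 < inf (singular_values M).
  by rewrite -(pmulr_lgt0 _ b0); apply: lt_le_trans hinf.
rewrite ler_pdivrMr // mulrAC ler_pdivlMr //.
by apply: le_trans hsup _; rewrite mulrC.
Qed.
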